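(* Let $\alpha=[0;a_1,a_2,\ldots]\in\mathbf{Bad}$ be such that its continued fraction expansion begins in infinitely many palindromes, i.e. there are infinitely many $n$ such that the word $a_1a_2\ldots a_n$ is a palindrome. Let $\beta$ be any real number equal to $\alpha$ up to a rational homography. Then $\inf_{q\ge1}q\cdot\Vert q\alpha\Vert\cdot\Vert q\beta\Vert=0$ and, moreover, $$\liminf_{q\to+\infty}q^2\cdot\Vert q\alpha\Vert\cdot\Vert q\beta\Vert<+\infty.$$
   Context: For a real number $y$, $\Vert y\Vert$ denotes the distance from $y$ to the nearest integer. $\mathbf{Bad}=\{\alpha\in\mathbb{R} : \inf_{q\ge1} q\Vert q\alpha\Vert>0\}$ (equivalently, real numbers with bounded partial quotients). A finite word $w_1\ldots w_n$ is a palindrome if $w_i=w_{n+1-i}$ for all $i$. A real number $\beta$ is equal to $\alpha$ up to a rational homography if $\beta=(a\alpha+b)/(c\alpha+d)$ for some integers $a,b,c,d$ with $ad-bc\neq0$. *)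

(* Defs.v *)
From Stdlib Require Import Reals ZArith.
From Coquelicot Require Import Coquelicot.
Open Scope R_scope.

Definition dist_int (y : R) : R :=
  Rmin (y - IZR (Int_part y)) (IZR (Int_part y) + 1 - y).

Definition inf_q_ge1 (f : nat -> R) : Rbar :=
  Rbar_glb (fun x => exists q : nat, (1 <= q)%nat /\ x = Finite (f q)).

Definition Bad (alpha : R) : Prop :=
  Rbar_lt (Finite 0) (inf_q_ge1 (fun q => INR q * dist_int (INR q * alpha))).

(* Gauss map x |-> {1/x} and partial quotients:
   for alpha = [0; a_1, a_2, ...] (irrational, in (0,1)),
   cf_pq alpha n = a_n (n >= 1), a_n = floor (1 / T^(n-1) alpha). *)
Definition gauss (x : R) : R := / x - IZR (Int_part (/ x)).

Definition cf_pq (alpha : R) (n : nat) : Z :=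
  Int_part (/ (Nat.iter (n - 1) gauss alpha)).

Definition cf_prefix_palindrome (alpha : R) (n : nat) : Prop :=
  forall i : nat, (1 <= i <= n)%nat -> cf_pq alpha i = cf_pq alpha (n + 1 - i).

Definition rational_homography (alpha beta : R) : Prop :=
  exists a b c d : Z, (a * d - b * c <> 0)%Z /\
    beta = (IZR a * alpha + IZR b) / (IZR c * alpha + IZR d).

(* Main.v *)
Require Import Defs.
From Stdlib Require Import Reals ZArith Lra Lia List.
From Coquelicot Require Import Coquelicot.
Open Scope R_scope.

Record mat := Mk { m11 : Z; m12 : Z; m21 : Z; m22 : Z }.
Definition mmul (X Y : mat) : mat :=
  Mk (m11 X * m11 Y + m12 X * m21 Y)%Z (m11 X * m12 Y + m12 X * m22 Y)%Z
     (m21 X * m11 Y + m22 X * m21 Y)%Z (m21 X * m12 Y + m22 X * m22 Y)%Z.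
Definition mI := Mk 1 0 0 1.
Definition mM (z : Z) := Mk z 1 1 0.
Definition mtr (X : mat) := Mk (m11 X) (m21 X) (m12 X) (m22 X).
Definition mprod (l : list Z) : mat := fold_right (fun z P => mmul (mM z) P) mI l.

Lemma mmul_assoc X Y W : mmul X (mmul Y W) = mmul (mmul X Y) W.
Proof. destruct X, Y, W; unfold mmul; cbn [m11 m12 m21 m22 mI]; f_equal; ring. Qed.
Lemma mmul_I_r X : mmul X mI = X.
Proof. destruct X; unfold mmul; cbn [m11 m12 m21 m22 mI]; f_equal; ring. Qed.
Lemma mmul_I_l X : mmul mI X = X.
Proof. destruct X; unfold mmul; cbn [m11 m12 m21 m22 mI]; f_equal; ring. Qed.
Lemma mtr_mul X Y : mtr (mmul X Y) = mmul (mtr Y) (mtr X).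
Proof. destruct X, Y; unfold mmul, mtr; cbn [m11 m12 m21 m22]; f_equal; ring. Qed.

Lemma mprod_app l1 l2 : mprod (l1 ++ l2) = mmul (mprod l1) (mprod l2).
Proof.
  induction l1 as [|z l IH]; simpl. now rewrite mmul_I_l.
  rewrite IH. apply mmul_assoc.
Qed.

Lemma mprod_rev l : mtr (mprod l) = mprod (rev l).
Proof.
  induction l as [|z l IH]; simpl. reflexivity.
  rewrite mtr_mul, IH, mprod_app. simpl. rewrite mmul_I_r. reflexivity.
Qed.

Lemma mprod_snoc l z : mprod (l ++ z :: nil) = mmul (mprod l) (mM z).
Proof. rewrite mprod_app. simpl. now rewrite mmul_I_r. Qed.

Lemma pal_sym (a : nat -> Z) n :
  (forall i, (1 <= i <= n)%nat -> a i = a (n + 1 - i)%nat) ->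
  m12 (mprod (map a (seq 1 n))) = m21 (mprod (map a (seq 1 n))).
Proof.
  intros H.
  assert (E : rev (map a (seq 1 n)) = map a (seq 1 n)).
  { apply nth_ext with (d := 0%Z) (d' := 0%Z).
    - now rewrite length_rev.
    - intros i Hi. rewrite length_rev, length_map, length_seq in Hi.
      rewrite rev_nth by (rewrite length_map, length_seq; lia).
      rewrite length_map, length_seq.
      rewrite (nth_indep _ 0%Z (a 0%nat)) by (rewrite length_map, length_seq; lia).
      rewrite (nth_indep (map a (seq 1 n)) 0%Z (a 0%nat)) by (rewrite length_map, length_seq; lia).
      rewrite !map_nth, !seq_nth by lia.
      rewrite H by lia. f_equal. lia. }
  assert (T := mprod_rev (map a (seq 1 n))). rewrite E in T.
  set (P := mprod (map a (seq 1 n))) in *. destruct P; unfold mtr in T; simpl in *.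
  congruence.
Qed.

Lemma dist_int_nonneg y : 0 <= dist_int y.
Proof.
  unfold dist_int. destruct (base_Int_part y). apply Rmin_glb; lra.
Qed.

Lemma dist_int_le y m : dist_int y <= Rabs (y - IZR m).
Proof.
  unfold dist_int. destruct (base_Int_part y) as [H1 H2].
  set (f := Int_part y) in *.
  destruct (Z_le_gt_dec m f) as [Hm|Hm].
  - apply IZR_le in Hm. eapply Rle_trans. apply Rmin_l.
    rewrite Rabs_right by lra. lra.
  - assert (Hm' : (f + 1 <= m)%Z) by lia. apply IZR_le in Hm'. rewrite plus_IZR in Hm'.
    eapply Rle_trans. apply Rmin_r.
    rewrite Rabs_left1 by lra. lra.
Qed.

Lemma dist_int_abs (Q m : Z) y :
  dist_int (INR (Z.abs_nat Q) * y) <= Rabs (IZR Q * y - IZR m).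
Proof.
  rewrite INR_IZR_INZ, Zabs2Nat.id_abs.
  destruct (Z_le_gt_dec 0 Q).
  - rewrite Z.abs_eq by lia. apply dist_int_le.
  - rewrite Z.abs_neq by lia. rewrite opp_IZR.
    eapply Rle_trans. apply (dist_int_le _ (- m)).
    rewrite opp_IZR. rewrite <- Rabs_Ropp. right. f_equal. ring.
Qed.

Definition irr (y : R) := forall p q : Z, y * IZR q = IZR p -> q = 0%Z.

Lemma gauss_step y : 0 < y < 1 -> irr y ->
  (1 <= Int_part (/ y))%Z /\ 0 < gauss y < 1 /\ irr (gauss y).
Proof.
  intros Hy Hi. unfold gauss.
  assert (Ht : 1 < / y).
  { rewrite <- Rinv_1. apply Rinv_lt_contravar; lra. }
  destruct (base_Int_part (/ y)) as [H1 H2].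
  set (f := Int_part (/ y)) in *.
  assert (Hf : (1 <= f)%Z).
  { assert (0 < f)%Z. apply lt_IZR. lra. lia. }
  split; [exact Hf|]. split.
  - split; [|lra].
    destruct (Rle_lt_or_eq_dec (IZR f) (/ y) H1) as [h|h]; [lra|].
    exfalso. assert (E : y * IZR f = IZR 1). { rewrite h. simpl. field. lra. }
    apply Hi in E. lia.
  - intros p q E.
    assert (E2 : y * IZR (p + f * q) = IZR q).
    { rewrite plus_IZR, mult_IZR, <- E. field. lra. }
    apply Hi in E2.
    assert (IZR q = 0).
    { assert (y * IZR (p + f * q) = IZR q) by (rewrite plus_IZR, mult_IZR, <- E; field; lra).
      rewrite E2 in H. simpl in H. lra. }
    apply eq_IZR. exact H.
Qed.

Lemma bad_irr alpha : Bad alpha -> irr alpha.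
Proof.
  intros HB p q E. destruct (Z.eq_dec q 0) as [|Hq]; [assumption|exfalso].
  set (k := Z.abs_nat q).
  assert (Hk : (1 <= k)%nat) by (unfold k; lia).
  assert (D : dist_int (INR k * alpha) = 0).
  { apply Rle_antisym; [|apply dist_int_nonneg].
    eapply Rle_trans. apply (dist_int_abs q p). rewrite Rmult_comm, E.
    unfold Rminus. rewrite Rplus_opp_r, Rabs_R0. lra. }
  unfold Bad, inf_q_ge1 in HB.
  unfold Rbar_glb in HB. destruct (Rbar_ex_glb _) as [l [L L']]. simpl in HB.
  assert (L1 := L (Finite 0) (ex_intro _ k (conj Hk (f_equal Finite (eq_sym (eq_trans (f_equal (Rmult (INR k)) D) (Rmult_0_r _))))))).
  destruct l; simpl in *; lra.
Qed.

Definition xs alpha n := Nat.iter n gauss alpha.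
Definition Pm alpha n := mprod (map (cf_pq alpha) (seq 1 n)).

Lemma xs_prop alpha : 0 < alpha < 1 -> irr alpha ->
  forall n, 0 < xs alpha n < 1 /\ irr (xs alpha n).
Proof.
  intros Ha Hi n. induction n as [|n [IH1 IH2]]. now split.
  destruct (gauss_step _ IH1 IH2) as [_ [H1 H2]]. split; assumption.
Qed.

Lemma Pm_S alpha n : Pm alpha (S n) = mmul (Pm alpha n) (mM (Int_part (/ xs alpha n))).
Proof.
  unfold Pm. rewrite seq_S, map_app. simpl map. rewrite mprod_snoc.
  unfold cf_pq. replace (S n - 1)%nat with n by lia. reflexivity.
Qed.

Definition inv alpha n :=
  let P := Pm alpha n in
  IZR (m21 P) + IZR (m22 P) * xs alpha n = alpha * (IZR (m11 P) + IZR (m12 P) * xs alpha n) /\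
  (m11 P * m22 P - m12 P * m21 P = 1 \/ m11 P * m22 P - m12 P * m21 P = -1)%Z /\
  (1 <= m11 P)%Z /\ (0 <= m12 P)%Z /\ (Z.of_nat n <= m11 P)%Z.

Lemma inv_all alpha : 0 < alpha < 1 -> irr alpha -> forall n, inv alpha n.
Proof.
  intros Ha Hi n.
  assert (G : inv alpha n /\ (Z.of_nat n + 1 <= m11 (Pm alpha n) + m12 (Pm alpha n))%Z).
  2: apply G.
  induction n as [|n [[E [D [A1 [B0 An]]]] HS]].
  - unfold inv, Pm; simpl. repeat split; try lia. simpl. ring.
  - destruct (xs_prop alpha Ha Hi n) as [Hx Hxi].
    destruct (gauss_step _ Hx Hxi) as [Ha1 _].
    unfold inv in *. rewrite Pm_S.
    set (P := Pm alpha n) in *. set (a := Int_part (/ xs alpha n)) in *.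
    assert (Ea : xs alpha (S n) = / xs alpha n - IZR a) by reflexivity.
    set (y := xs alpha n) in *. rewrite Ea. clearbody a y.
    destruct P as [A B C D0]; unfold mmul, mM; cbn [m11 m12 m21 m22] in *.
    split; [split|].
    + rewrite !plus_IZR, !mult_IZR.
      transitivity ((IZR C + IZR D0 * y) / y). field; apply Rgt_not_eq; lra.
      rewrite E. field; apply Rgt_not_eq; lra.
    + split; [destruct D as [D|D]; [right|left]; nia|]. repeat split; nia.
    + nia.
Qed.

Lemma approx alpha n : 0 < alpha < 1 -> irr alpha ->
  m12 (Pm alpha n) = m21 (Pm alpha n) ->
  let P := Pm alpha n in
  Rabs (IZR (m11 P) * alpha - IZR (m21 P)) * IZR (m11 P) <= 1 /\
  Rabs (IZR (m12 P) * alpha - IZR (m22 P)) * IZR (m11 P) <= 1.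
Proof.
  intros Ha Hi Hs P.
  destruct (inv_all alpha Ha Hi n) as [E [D [A1 [B0 An]]]].
  destruct (xs_prop alpha Ha Hi n) as [Hx _].
  fold P in E, D, A1, B0, An.
  set (x := xs alpha n) in *.
  destruct P as [A B C D0]; cbn [m11 m12 m21 m22] in *.
  apply IZR_le in A1. apply IZR_le in B0.
  set (s := IZR A + IZR B * x).
  assert (Hs1 : IZR A <= s) by (unfold s; nra).
  assert (Ed : IZR (A * D0 - B * C) = 1 \/ IZR (A * D0 - B * C) = -1)
    by (destruct D as [D|D]; rewrite D; [left|right]; reflexivity).
  rewrite minus_IZR, !mult_IZR in Ed.
  assert (E1 : (IZR A * alpha - IZR C) * s = x * (IZR A * IZR D0 - IZR B * IZR C)).
  { replace ((IZR A * alpha - IZR C) * s) with (IZR A * (alpha * s) - IZR C * s) by ring.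
    unfold s. rewrite <- E. ring. }
  assert (E2 : (IZR B * alpha - IZR D0) * s = - (IZR A * IZR D0 - IZR B * IZR C)).
  { replace ((IZR B * alpha - IZR D0) * s) with (IZR B * (alpha * s) - IZR D0 * s) by ring.
    unfold s. rewrite <- E. ring. }
  split.
  - apply Rle_trans with (Rabs (IZR A * alpha - IZR C) * s).
    apply Rmult_le_compat_l; [apply Rabs_pos|lra].
    rewrite <- (Rabs_right s) by lra. rewrite <- Rabs_mult, E1.
    destruct Ed as [Ed|Ed]; rewrite Ed, Rabs_mult, (Rabs_right x) by lra; [rewrite Rabs_R1 | rewrite Rabs_left by lra]; nra.
  - apply Rle_trans with (Rabs (IZR B * alpha - IZR D0) * s).
    apply Rmult_le_compat_l; [apply Rabs_pos|lra].
    rewrite <- (Rabs_right s) by lra. rewrite <- Rabs_mult, E2.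
    destruct Ed as [Ed|Ed]; rewrite Ed; [rewrite Rabs_Ropp, Rabs_R1 | rewrite Rabs_right by lra]; lra.
Qed.

Lemma nat_above X : exists n : nat, X < INR n.
Proof.
  destruct (archimed (Rabs X)) as [H1 _].
  assert (Hp : (0 < up (Rabs X))%Z) by (apply lt_IZR; pose proof (Rabs_pos X); lra).
  exists (Z.to_nat (up (Rabs X))). rewrite INR_IZR_INZ, Z2Nat.id by lia.
  pose proof (Rle_abs X). lra.
Qed.

Lemma final_bound (q A da db K0 Ka Kb : R) : 0 <= q -> q <= K0 * A -> 0 <= da -> 0 <= db ->
  da * A <= Ka -> db * A <= Kb -> 0 < A -> q ^ 2 * da * db <= K0 ^ 2 * Ka * Kb.
Proof.
  intros Hq HqA Hda Hdb Ha Hb HA.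
  assert (H1 : q ^ 2 <= (K0 * A) ^ 2) by (apply pow_incr; lra).
  apply Rle_trans with ((K0 * A) ^ 2 * da * db).
  { repeat apply Rmult_le_compat_r; auto. }
  replace ((K0 * A) ^ 2 * da * db) with (K0 ^ 2 * ((da * A) * (db * A))) by ring.
  replace (K0 ^ 2 * Ka * Kb) with (K0 ^ 2 * (Ka * Kb)) by ring. apply Rmult_le_compat_l. apply pow2_ge_0.
  apply Rmult_le_compat; try apply Rmult_le_pos; lra.
Qed.

Lemma core alpha beta : 0 < alpha < 1 -> irr alpha ->
  (forall N : nat, exists n : nat, (N < n)%nat /\ cf_prefix_palindrome alpha n) ->
  rational_homography alpha beta ->
  exists K, forall N : nat, exists q : nat, (N <= q)%nat /\
    INR q ^ 2 * dist_int (INR q * alpha) * dist_int (INR q * beta) <= K.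
Proof.
  intros Ha Hi Hpal [h1 [h2 [h3 [h4 [Hdet Hb]]]]].
  set (den := IZR h3 * alpha + IZR h4).
  assert (Hden : den <> 0).
  { intro E. assert (E2 : alpha * IZR h3 = IZR (- h4)) by (rewrite opp_IZR; unfold den in E; lra).
    apply Hi in E2. subst h3. unfold den in E. assert (h4 = 0%Z) by (apply eq_IZR; lra). subst h4. lia. }
  assert (Hbd : beta * den = IZR h1 * alpha + IZR h2) by (rewrite Hb; unfold den; field; exact Hden).
  set (delta := Rabs den).
  assert (Hdel : 0 < delta) by (apply Rabs_pos_lt; exact Hden).
  set (K0 := 2 * Rabs (IZR h3) + Rabs (IZR h4)).
  set (Ka := Rabs (IZR h3) + Rabs (IZR h4)).
  set (Kb := Rabs (IZR h1) + Rabs (IZR h3) * Rabs beta).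
  exists (K0 ^ 2 * Ka * Kb). intros N.
  destruct (nat_above ((INR N + Rabs (IZR h3)) / delta)) as [n0 Hn0].
  destruct (Hpal n0) as [n [Hn Hp]].
  assert (Hs := pal_sym (cf_pq alpha) n Hp). fold (Pm alpha n) in Hs.
  destruct (approx alpha n Ha Hi Hs) as [Ap1 Ap2].
  destruct (inv_all alpha Ha Hi n) as [_ [_ [A1 [_ An]]]].
  set (P := Pm alpha n) in *.
  destruct P as [A B C D]; cbn [m11 m12 m21 m22] in *. subst B.
  apply IZR_le in A1.
  assert (HAn : INR n0 <= IZR A).
  { rewrite INR_IZR_INZ. apply IZR_le. lia. }
  set (e1 := IZR A * alpha - IZR C) in *.
  set (e2 := IZR C * alpha - IZR D) in *.
  assert (He1 : Rabs e1 <= 1) by nra.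
  set (Q := (h3 * C + h4 * A)%Z).
  assert (EQ : IZR Q = IZR A * den - IZR h3 * e1) by (unfold Q, e1, den; rewrite plus_IZR, !mult_IZR; ring).
  assert (Eda : IZR Q * alpha - IZR (h3 * D + h4 * C) = IZR h3 * e2 + IZR h4 * e1)
    by (unfold Q, e1, e2; rewrite !plus_IZR, !mult_IZR; ring).
  assert (Edb : IZR Q * beta - IZR (h1 * C + h2 * A) = e1 * (IZR h1 - IZR h3 * beta)).
  { rewrite EQ, plus_IZR, !mult_IZR.
    replace ((IZR A * den - IZR h3 * e1) * beta) with (IZR A * (beta * den) - IZR h3 * e1 * beta) by ring.
    rewrite Hbd. unfold e1. ring. }
  set (q := Z.abs_nat Q).
  assert (Hq : INR q = Rabs (IZR Q)) by (unfold q; rewrite INR_IZR_INZ, Zabs2Nat.id_abs, abs_IZR; reflexivity).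
  assert (Hda := dist_int_abs Q (h3 * D + h4 * C) alpha). fold q in Hda. rewrite Eda in Hda.
  assert (Hdb := dist_int_abs Q (h1 * C + h2 * A) beta). fold q in Hdb. rewrite Edb in Hdb.
  exists q. split.
  - apply INR_le. rewrite Hq, EQ.
    assert (L : IZR A * delta - Rabs (IZR h3) <= Rabs (IZR A * den - IZR h3 * e1)).
    { pose proof (Rabs_triang_inv (IZR A * den) (IZR h3 * e1)) as H.
      rewrite !Rabs_mult, (Rabs_right (IZR A)) in H by lra. fold delta in H.
      pose proof (Rabs_pos (IZR h3)). pose proof (Rabs_pos e1). nra. }
    assert (INR N + Rabs (IZR h3) <= IZR A * delta).
    { apply Rmult_lt_compat_r with (r := delta) in Hn0; auto.
      unfold Rdiv in Hn0. rewrite Rmult_assoc, Rinv_l in Hn0 by lra. nra. }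
    lra.
  - apply final_bound with (A := IZR A).
    + apply pos_INR.
    + rewrite Hq, EQ. unfold K0.
      assert (HC : Rabs (IZR C) <= 2 * IZR A).
      { replace (IZR C) with (IZR A * alpha - e1) by (unfold e1; ring).
        pose proof (Rabs_triang (IZR A * alpha) (- e1)). rewrite Rabs_Ropp in H.
        rewrite Rabs_mult, (Rabs_right alpha), (Rabs_right (IZR A)) in H by lra. unfold Rminus. nra. }
      replace (IZR A * den - IZR h3 * e1) with (IZR h3 * IZR C + IZR h4 * IZR A) by (unfold den, e1; ring).
      eapply Rle_trans. apply Rabs_triang. rewrite !Rabs_mult, (Rabs_right (IZR A)) by lra.
      pose proof (Rabs_pos (IZR h3)). pose proof (Rabs_pos (IZR h4)). nra.
    + apply dist_int_nonneg.
    + apply dist_int_nonneg.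
    + eapply Rle_trans. apply Rmult_le_compat_r; [lra|exact Hda].
      eapply Rle_trans. apply Rmult_le_compat_r; [lra|apply Rabs_triang].
      rewrite !Rabs_mult. unfold Ka.
      pose proof (Rabs_pos (IZR h3)). pose proof (Rabs_pos (IZR h4)).
      pose proof (Rabs_pos e1). pose proof (Rabs_pos e2). nra.
    + eapply Rle_trans. apply Rmult_le_compat_r; [lra|exact Hdb].
      rewrite Rabs_mult. unfold Kb.
      assert (Rabs (IZR h1 - IZR h3 * beta) <= Rabs (IZR h1) + Rabs (IZR h3) * Rabs beta).
      { unfold Rminus. eapply Rle_trans. apply Rabs_triang. rewrite Rabs_Ropp, Rabs_mult. lra. }
      pose proof (Rabs_pos e1). pose proof (Rabs_pos (IZR h1 - IZR h3 * beta)). nra.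
    + lra.
Qed.

Theorem theorem6 (alpha beta : R) :
  0 < alpha < 1 ->
  Bad alpha ->
  (forall N : nat, exists n : nat, (N < n)%nat /\ cf_prefix_palindrome alpha n) ->
  rational_homography alpha beta ->
  inf_q_ge1 (fun q => INR q * dist_int (INR q * alpha) * dist_int (INR q * beta))
    = Finite 0 /\
  Rbar_lt (LimInf_seq (fun q => INR q ^ 2 * dist_int (INR q * alpha)
                                           * dist_int (INR q * beta)))
          p_infty.
Proof.
  intros Ha HB Hpal Hh.
  assert (Hi := bad_irr alpha HB).
  destruct (core alpha beta Ha Hi Hpal Hh) as [K HK].
  split.
  - unfold inf_q_ge1. apply Rbar_is_glb_unique. split.
    + intros x [q [Hq ->]]. simpl.
      apply Rmult_le_pos; [apply Rmult_le_pos|]; try apply dist_int_nonneg. apply pos_INR.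
    + intros b Hbnd. destruct b as [r| |]; simpl; auto.
      * destruct (Rle_dec r 0) as [|Hr]; auto. exfalso.
        destruct (nat_above (K / r)) as [N HN].
        destruct (HK (Nat.max N 1)) as [q [Hq Hu]].
        assert (Hr' := Hbnd (Finite (INR q * dist_int (INR q * alpha) * dist_int (INR q * beta)))
                          (ex_intro _ q (conj (Nat.le_trans _ _ _ (Nat.le_max_r N 1) Hq) eq_refl))).
        simpl in Hr'.
        assert (HNq : INR N <= INR q) by (apply le_INR; lia).
        assert (H1q : 1 <= INR q) by (replace 1 with (INR 1) by reflexivity; apply le_INR; lia).
        assert (HKN : K < INR N * r).
        { apply Rmult_lt_compat_r with (r := r) in HN; [|lra].
          unfold Rdiv in HN. rewrite Rmult_assoc, Rinv_l in HN by lra. lra. }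
        set (v := INR q * dist_int (INR q * alpha) * dist_int (INR q * beta)) in *.
        assert (Ev : INR q ^ 2 * dist_int (INR q * alpha) * dist_int (INR q * beta) = v * INR q)
          by (unfold v; ring).
        rewrite Ev in Hu. nra.
      * destruct (HK 1%nat) as [q [Hq _]].
        exact (Hbnd _ (ex_intro _ q (conj Hq eq_refl))).
  - destruct (ex_LimInf_seq (fun q => INR q ^ 2 * dist_int (INR q * alpha) * dist_int (INR q * beta))) as [l Hl].
    rewrite (is_LimInf_seq_unique _ _ Hl).
    destruct l as [l| |]; simpl; auto.
    destruct (Hl K) as [N HN].
    destruct (HK N) as [q [Hq Hu]].
    specialize (HN q Hq). lra.
Qed.
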